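(* Let $X$ be a space with a map $T:X\to X$ and a (not necessarily invariant) reference probability measure $\mu$, and let $\alpha=\{A_1,\dots,A_r\}$ be a finite measurable partition of $X$. For every recursive reversible compression algorithm $Z$ on the alphabet $\{1,\dots,r\}$, $q_Z(X,T,\alpha)\ge q_{AIC}(X,T,\alpha)$.
   Context: $\varphi_\alpha(x)=\omega\in\{1,\dots,r\}^{\mathbb{N}}$ is defined by $T^j(x)\in A_{\omega_j}$ for all $j$; $\Omega_\alpha=\varphi_\alpha(X)$ and $\mu_\alpha$ is the measure on $\Omega_\alpha$ defined on cylinders by $\mu_\alpha(\{\bar\omega:\bar\omega_i=\omega_i, k\le i\le n-1\})=\mu(\bigcap_{i=k}^{n-1}T^{-i}A_{\omega_i})$. A recursive reversible compression algorithm is an injective recursive map $Z$ from finite strings to binary strings, $I_Z(s)=|Z(s)|$; $AIC(s)=\min\{|P|:C(P)=s\}$ for a fixed universal computing machine $C$. For $I\in\{AIC,I_Z\}$, $I(x,\alpha,n)=I(\omega^n)$ with $\omega=\varphi_\alpha(x)$ and $\omega^n$ its first $n$ symbols, and the $q$-entropy relative to $\alpha$ is $h^q(X,\alpha)=\limsup_{n\to\infty}\int_{\Omega_\alpha}\frac{I(\omega^n)}{n^q}\,d\mu_\alpha(\omega)$. The intermittent chaos index is $q(X,T,\alpha)=\inf\{p>0:h^p(X,\alpha)=0\}$; $q_{AIC}$, $q_Z$ are this index for $I=AIC$, $I=I_Z$. *)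

(* Defs.v *)
From HB Require Import structures.
From mathcomp Require Import all_boot all_order all_algebra.
From mathcomp Require Import all_classical all_reals all_analysis.
Set Implicit Arguments. Unset Strict Implicit. Unset Printing Implicit Defensive.
Import Order.TTheory GRing.Theory Num.Theory.
Local Open Scope classical_set_scope.
Local Open Scope ring_scope.

Inductive code : Type :=
| CZero | CSucc | CProj of nat
| CComp of code & seq code
| CPrec of code & code
| CMu of code.

Inductive eval : code -> seq nat -> nat -> Prop :=
| eZero v : eval CZero v 0
| eSucc x v : eval CSucc (x :: v) x.+1
| eProj i v : (i < size v)%N -> eval (CProj i) v (nth 0%N v i)
| eComp f gs v ys y : evals gs v ys -> eval f ys y -> eval (CComp f gs) v y
| ePrec0 f g v y : eval f v y -> eval (CPrec f g) (0%N :: v) y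
| ePrecS f g n v r y : eval (CPrec f g) (n :: v) r ->
    eval g (n :: r :: v) y -> eval (CPrec f g) (n.+1 :: v) y
| eMu f v n : eval f (n :: v) 0 ->
    (forall m, (m < n)%N -> exists k, eval f (m :: v) k.+1) -> eval (CMu f) v n
with evals : seq code -> seq nat -> seq nat -> Prop :=
| esNil v : evals [::] v [::]
| esCons g gs v y ys : eval g v y -> evals gs v ys -> evals (g :: gs) v (y :: ys).

Definition partial_recursive (A B : countType) (f : A -> option B) : Prop :=
  exists c : code, forall (a : A) (y : nat),
    eval c [:: pickle a] y <-> exists b, f a = Some b /\ y = pickle b.

Definition recursive (A B : countType) (f : A -> B) : Prop :=
  partial_recursive (fun a => Some (f a)).

(* Strings over the alphabet {1,...,r} are represented as seq 'I_r. *)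
Definition word (r : nat) := seq 'I_r.

Definition computing_machine (r : nat) (M : seq bool -> option (word r)) : Prop :=
  partial_recursive M.

Definition universal_machine (r : nat) (C : seq bool -> option (word r)) : Prop :=
  computing_machine C /\
  forall M : seq bool -> option (word r), computing_machine M ->
    exists c : nat, forall P s, M P = Some s ->
      exists P', C P' = Some s /\ (size P' <= size P + c)%N.

Definition compression_algorithm (r : nat) (Z : word r -> seq bool) : Prop :=
  injective Z /\ recursive Z.

Definition AIC (R : realType) (r : nat) (C : seq bool -> option (word r))
  (s : word r) : \bar R :=
  ereal_inf [set ((size P)%:R)%:E | P in [set P | C P = Some s]].

Definition I_Z (R : realType) (r : nat) (Z : word r -> seq bool)
  (s : word r) : \bar R := ((size (Z s))%:R)%:E.

Definition is_partition (d : measure_display) (X : measurableType d) (r : nat)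
  (A : 'I_r -> set X) : Prop :=
  (forall i, measurable (A i)) /\
  (forall i j, i != j -> A i `&` A j = set0) /\
  \bigcup_(i in [set: 'I_r]) A i = setT.

(* The cylinder { omega : omega_i = w_i, 0 <= i < n } pulled back to X:
   \bigcap_{i<n} T^{-i} A_{w_i}; mu_alpha of the cylinder is mu of this set. *)
Definition cylinder (d : measure_display) (X : measurableType d) (T : X -> X)
  (r : nat) (A : 'I_r -> set X) (n : nat) (w : n.-tuple 'I_r) : set X :=
  \bigcap_(i in [set: 'I_n]) ((iter i T) @^-1` (A (tnth w i))).

(* \int_{Omega_alpha} I(omega^n) d mu_alpha(omega): the integrand depends only
   on the first n symbols, so this is the sum over cylinders of length n. *)
Definition mean_info (R : realType) (d : measure_display) (X : measurableType d)
  (mu : probability X R) (T : X -> X) (r : nat) (A : 'I_r -> set X)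
  (I : word r -> \bar R) (n : nat) : \bar R :=
  (\sum_(w : n.-tuple 'I_r) (I (tval w) * mu (cylinder T A w)))%E.

Definition q_entropy (R : realType) (d : measure_display) (X : measurableType d)
  (mu : probability X R) (T : X -> X) (r : nat) (A : 'I_r -> set X)
  (I : word r -> \bar R) (q : R) : \bar R :=
  limn_esup (fun n : nat =>
    (mean_info mu T A I n * ((n%:R `^ q)^-1)%:E)%E).

Definition chaos_index (R : realType) (d : measure_display) (X : measurableType d)
  (mu : probability X R) (T : X -> X) (r : nat) (A : 'I_r -> set X)
  (I : word r -> \bar R) : \bar R :=
  ereal_inf [set p%:E | p in [set p : R | 0 < p /\ q_entropy mu T A I p = 0%E]].

(* Main.v *)
Require Import Defs.
From HB Require Import structures.
From mathcomp Require Import all_boot all_order all_algebra.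
From mathcomp Require Import all_classical all_reals all_analysis.
From mathcomp Require Import zify.
From Stdlib Require Import Lia.
Import Order.TTheory GRing.Theory Num.Theory.
Local Open Scope classical_set_scope.
Local Open Scope ring_scope.

Module Aux.
Import Defs.
Set Implicit Arguments. Unset Strict Implicit. Unset Printing Implicit Defensive.
Local Close Scope classical_set_scope.
Local Close Scope ring_scope.

Definition spec (n : nat) (c : code) (f : seq nat -> nat) :=
  forall v, size v = n -> forall y, eval c v y <-> y = f v.

Definition specs (n : nat) (gs : seq code) (Fs : seq (seq nat -> nat)) :=
  size gs = size Fs /\
  forall v, size v = n -> forall ys, evals gs v ys <-> ys = map (fun F => F v) Fs.

Lemma spec_ext n c f g : spec n c f -> (forall v, size v = n -> f v = g v) -> spec n c g.
Proof. by move=> H E v Hv y; rewrite -E //; apply: H. Qed.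

Lemma specs_nil n : specs n [::] [::].
Proof.
split=> // v _ ys; split; first by move=> H; inversion H.
by move=> ->; constructor.
Qed.

Lemma specs_cons n g gs G Gs : spec n g G -> specs n gs Gs -> specs n (g :: gs) (G :: Gs).
Proof.
move=> Hg [Hs Hgs]; split; first by rewrite /= Hs.
move=> v Hv ys; split.
  move=> H; move/eqP: Hv => Hv; inversion H; subst.
  match goal with h : eval g v _ |- _ => move/(Hg v (eqP Hv)): h => -> end.
  by match goal with h : evals gs v _ |- _ => move/(Hgs v (eqP Hv)): h => -> end.
move=> ->; constructor; first by apply/(Hg v Hv).
by apply/(Hgs v Hv).
Qed.

Lemma spec_zero n : spec n CZero (fun _ => 0).
Proof. move=> v _ y; split; first by move=> H; inversion H. by move=> ->; constructor. Qed.

Lemma spec_succ : spec 1 CSucc (fun v => (head 0 v).+1).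
Proof.
case=> [|x [|//]] // _ y; split; first by move=> H; inversion H.
by move=> ->; constructor.
Qed.

Lemma spec_proj n i : i < n -> spec n (CProj i) (fun v => nth 0 v i).
Proof.
move=> Hi v Hv y; split; first by move=> H; inversion H.
by move=> ->; constructor; rewrite Hv.
Qed.

Lemma spec_comp m n f F gs Gs : spec m f F -> specs n gs Gs -> size Gs = m ->
  spec n (CComp f gs) (fun v => F (map (fun G => G v) Gs)).
Proof.
move=> Hf [Hs Hgs] HG v Hv y; split.
  move=> H; move/eqP: Hv => Hv; inversion H; subst.
  match goal with h : evals gs v _ |- _ => move/(Hgs v (eqP Hv)): h => E end; subst.
  by apply/(Hf _ _); rewrite // size_map.
move=> ->; econstructor; first by apply/(Hgs v Hv).
by apply/Hf; rewrite // size_map.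
Qed.

Fixpoint precf (F : seq nat -> nat) (G : seq nat -> nat) (k : nat) (w : seq nat) :=
  if k is k'.+1 then G (k' :: precf F G k' w :: w) else F w.

Lemma spec_prec n f F g G : spec n f F -> spec n.+2 g G ->
  spec n.+1 (CPrec f g) (fun v => precf F G (head 0 v) (behead v)).
Proof.
move=> Hf Hg [|k w] //= [Hw] y.
elim: k y => [|k IH] y /=.
  split; first by move=> H; inversion H; subst; apply/Hf.
  by move=> ->; constructor; apply/Hf.
split.
  move=> H; inversion H; subst.
  match goal with h : eval (CPrec f g) _ _ |- _ => move/IH: h => E end; subst.
  by apply/Hg; rewrite //= Hw.
move=> ->; econstructor; first by apply/IH.
by apply/Hg; rewrite //= Hw.
Qed.

Fixpoint K (n : nat) : code := if n is n'.+1 then CComp CSucc [:: K n'] else CZero.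

Lemma spec_K m n : spec m (K n) (fun _ => n).
Proof.
elim: n => [|n IH]; first exact: spec_zero.
by apply: (spec_ext (spec_comp spec_succ (specs_cons IH (specs_nil _)) erefl)).
Qed.

Definition PRED := CPrec CZero (CProj 0).
Lemma spec_PRED : spec 1 PRED (fun v => (head 0 v).-1).
Proof.
apply: (spec_ext (spec_prec (@spec_zero 0) (spec_proj (n:=2) (i:=0) isT))).
by case=> [|k [|]] //= _; case: k.
Qed.

Definition ITER s := CPrec (CProj 0) (CComp s [:: CProj 1]).
Lemma spec_ITER s h : spec 1 s (fun v => h (head 0 v)) ->
  spec 2 (ITER s) (fun v => iter (nth 0 v 0) h (nth 0 v 1)).
Proof.
move=> Hs.
apply: (spec_ext (spec_prec (spec_proj (n:=1) (i:=0) isT)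
     (spec_comp Hs (specs_cons (spec_proj (n:=3) (i:=1) isT) (specs_nil _)) erefl))).
case=> [|k [|x [|]]] //= _.
by elim: k => //= k ->.
Qed.

Definition ADD := ITER CSucc.
Lemma spec_ADD : spec 2 ADD (fun v => nth 0 v 0 + nth 0 v 1).
Proof.
apply: (spec_ext (spec_ITER (h := S) spec_succ)).
move=> v _ /=; by elim: (nth 0 v 0) => //= k ->.
Qed.

Lemma spec_c1 n f F g1 G1 : spec 1 f F -> spec n g1 G1 ->
  spec n (CComp f [:: g1]) (fun v => F [:: G1 v]).
Proof. move=> Hf H1; exact: (spec_comp Hf (specs_cons H1 (@specs_nil n)) erefl). Qed.
Lemma spec_c2 n f F g1 G1 g2 G2 : spec 2 f F -> spec n g1 G1 -> spec n g2 G2 ->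
  spec n (CComp f [:: g1; g2]) (fun v => F [:: G1 v; G2 v]).
Proof. move=> Hf H1 H2; exact: (spec_comp Hf (specs_cons H1 (specs_cons H2 (@specs_nil n))) erefl). Qed.
Lemma spec_c3 n f F g1 G1 g2 G2 g3 G3 : spec 3 f F -> spec n g1 G1 -> spec n g2 G2 -> spec n g3 G3 ->
  spec n (CComp f [:: g1; g2; g3]) (fun v => F [:: G1 v; G2 v; G3 v]).
Proof. move=> Hf H1 H2 H3; exact: (spec_comp Hf (specs_cons H1 (specs_cons H2 (specs_cons H3 (@specs_nil n)))) erefl). Qed.

Definition P0 := CProj 0. Definition P1 := CProj 1. Definition P2 := CProj 2.
Lemma sP0 n : 0 < n -> spec n P0 (fun v => nth 0 v 0). Proof. exact: spec_proj. Qed.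
Lemma sP1 n : 1 < n -> spec n P1 (fun v => nth 0 v 1). Proof. exact: spec_proj. Qed.
Lemma sP2 n : 2 < n -> spec n P2 (fun v => nth 0 v 2). Proof. exact: spec_proj. Qed.

Definition SUB := CComp (ITER PRED) [:: P1; P0].
Lemma spec_SUB : spec 2 SUB (fun v => nth 0 v 0 - nth 0 v 1).
Proof.
apply: (spec_ext (spec_c2 (spec_ITER (h := predn) spec_PRED) (sP1 (n:=2) isT) (sP0 (n:=2) isT))).
move=> v _ /=; elim: (nth 0 v 1) => [|k /= ->]; first by rewrite subn0.
by rewrite subnS.
Qed.

Definition DIST := CComp ADD [:: SUB; CComp SUB [:: P1; P0]].
Lemma spec_DIST : spec 2 DIST (fun v => (nth 0 v 0 - nth 0 v 1) + (nth 0 v 1 - nth 0 v 0)).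
Proof.
exact: (spec_ext (spec_c2 spec_ADD spec_SUB (spec_c2 spec_SUB (sP1 (n:=2) isT) (sP0 (n:=2) isT)))).
Qed.

Definition ISZ := CComp SUB [:: K 1; P0].
Lemma spec_ISZ : spec 1 ISZ (fun v => 1 - head 0 v).
Proof.
apply: (spec_ext (spec_c2 spec_SUB (@spec_K 1 1) (sP0 (n:=1) isT))).
by case=> [|x [|]].
Qed.

Definition SG := CComp ISZ [:: ISZ].
Lemma spec_SG : spec 1 SG (fun v => 1 - (1 - head 0 v)).
Proof. exact: (spec_ext (spec_c1 spec_ISZ spec_ISZ)). Qed.

Definition EQ := CComp ISZ [:: DIST].
Lemma spec_EQ : spec 2 EQ (fun v => nat_of_bool (nth 0 v 0 == nth 0 v 1)).
Proof.
apply: (spec_ext (spec_c1 spec_ISZ spec_DIST)).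
move=> v _ /=; case: eqP => [->|]; first by rewrite subnn.
move=> H; apply/eqP; rewrite subn_eq0; lia.
Qed.

Definition AND := CComp SUB [:: ADD; K 1].
Lemma spec_AND : spec 2 AND (fun v => nth 0 v 0 + nth 0 v 1 - 1).
Proof. exact: (spec_ext (spec_c2 spec_SUB spec_ADD (@spec_K 2 1))). Qed.

Definition HALF := CPrec CZero (CComp SUB [:: P0; P1]).
Lemma spec_HALF : spec 1 HALF (fun v => (head 0 v)./2).
Proof.
apply: (spec_ext (spec_prec (@spec_zero 0) (spec_c2 spec_SUB (sP0 (n:=2) isT) (sP1 (n:=2) isT)))).
case=> [|k [|]] //= _.
elim: k => //= k ->.
rewrite -[in LHS](odd_double_half k) uphalf_half -addnn; lia.
Qed.

Definition DBL := CComp ADD [:: P0; P0].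
Lemma spec_DBL : spec 1 DBL (fun v => (head 0 v).*2).
Proof.
apply: (spec_ext (spec_c2 spec_ADD (sP0 (n:=1) isT) (sP0 (n:=1) isT))).
by case=> [|x [|]] //= _; rewrite addnn.
Qed.

Lemma iter_half i k : iter i half k = k %/ 2 ^ i.
Proof. elim: i => [|i /= ->]; first by rewrite divn1. by rewrite -divn2 expnSr divnMA. Qed.
Lemma iter_double i z : iter i double z = z * 2 ^ i.
Proof. elim: i => [|i /= ->]; first by rewrite muln1. by rewrite expnS -muln2; lia. Qed.

Definition HALFI := ITER HALF.
Lemma spec_HALFI : spec 2 HALFI (fun v => nth 0 v 1 %/ 2 ^ (nth 0 v 0)).
Proof.
apply: (spec_ext (spec_ITER (h := half) spec_HALF)).
by move=> v _; rewrite iter_half.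
Qed.

Definition badb (r y : nat) : bool := (0 < y) && (2 ^ r %| y).

Definition BADY r := CComp AND [:: SG; CComp EQ [:: P0; CComp (ITER DBL) [:: K r; CComp HALFI [:: K r; P0]]]].
Lemma spec_BADY r : spec 1 (BADY r) (fun v => nat_of_bool (badb r (head 0 v))).
Proof.
apply: (spec_ext (spec_c2 spec_AND spec_SG (spec_c2 spec_EQ (sP0 (n:=1) isT)
   (spec_c2 (spec_ITER (h := double) spec_DBL) (@spec_K 1 r)
       (spec_c2 spec_HALFI (@spec_K 1 r) (sP0 (n:=1) isT)))))).
case=> [|y [|]] //= _.
rewrite iter_double /badb (eq_sym y) -dvdn_eq.
by case: y => [|y] /=; [rewrite dvdn0 | case: (_ %| _)].
Qed.

Definition BAD r := CComp (BADY r) [:: HALFI].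
Lemma spec_BAD r : spec 2 (BAD r) (fun v => nat_of_bool (badb r (nth 0 v 1 %/ 2 ^ (nth 0 v 0)))).
Proof. exact: (spec_ext (spec_c1 (spec_BADY r) spec_HALFI)). Qed.

Definition SUMBAD r := CPrec CZero (CComp ADD [:: P1; CComp (BAD r) [:: P0; P2]]).
Lemma spec_SUMBAD r : spec 2 (SUMBAD r)
  (fun v => \sum_(i < nth 0 v 0) nat_of_bool (badb r (nth 0 v 1 %/ 2 ^ i))).
Proof.
apply: (spec_ext (spec_prec (@spec_zero 1) (spec_c2 spec_ADD (sP1 (n:=3) isT)
   (spec_c2 (spec_BAD r) (sP0 (n:=3) isT) (sP2 (n:=3) isT))))).
case=> [|j [|k [|]]] //= _.
elim: j => [|j /= ->]; first by rewrite big_ord0.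
by rewrite big_ord_recr.
Qed.

Definition validf r k := 1 - \sum_(i < k) nat_of_bool (badb r (k %/ 2 ^ i)).

Definition VALID r := CComp ISZ [:: CComp (SUMBAD r) [:: P0; P0]].
Lemma spec_VALID r : spec 1 (VALID r) (fun v => validf r (head 0 v)).
Proof.
apply: (spec_ext (spec_c1 spec_ISZ (spec_c2 (spec_SUMBAD r) (sP0 (n:=1) isT) (sP0 (n:=1) isT)))).
by case=> [|k [|]].
Qed.


Definition Good r k := forall i, ~~ badb r (k %/ 2 ^ i).

Lemma badb_lt r i k : badb r (k %/ 2 ^ i) -> i < k.
Proof.
case/andP; rewrite divn_gt0 ?expn_gt0 // => H _.
exact: leq_trans (@ltn_expl 2 i isT) H.
Qed.

Lemma validf_Good r k : validf r k = 1 <-> Good r k.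
Proof.
rewrite /validf; split.
  move=> H i; apply/negP => Hb.
  have Hi := badb_lt Hb.
  move: H; rewrite (bigD1 (Ordinal Hi)) //= [badb _ _]Hb; lia.
move=> H; suff -> : \sum_(i < k) badb r (k %/ 2 ^ i) = 0 by [].
apply/eqP; rewrite sum_nat_eq0; apply/forallP => i /=.
by move: (H i); case: (badb _ _).
Qed.

Lemma validf01 r k : validf r k = 0 \/ validf r k = 1.
Proof. rewrite /validf; lia. Qed.

Lemma code_cons x s : CodeSeq.code (x :: s) = 2 ^ x * (CodeSeq.code s).*2.+1.
Proof. by []. Qed.

Lemma half_dbl1 q : q.*2.+1./2 = q.
Proof. by rewrite -[RHS](uphalf_double q). Qed.

Lemma Good_code r s : all (fun x => x < r) s -> Good r (CodeSeq.code s).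
Proof.
elim: s => [|x s IH] /=.
  by move=> _ i; rewrite div0n.
case/andP=> Hx Hs i.
set q := CodeSeq.code s.
case: (leqP i x) => Hi.
  have -> : 2 ^ x * q.*2.+1 %/ 2 ^ i = 2 ^ (x - i) * q.*2.+1.
    by rewrite -{1}(subnK Hi) expnD -mulnA mulnC -mulnA mulKn ?expn_gt0 // mulnC.
  rewrite /badb Gauss_dvdl; last by rewrite coprimeXl // coprime2n /= odd_double.
  rewrite dvdn_Pexp2l //; apply/negP => /andP [_ H]; lia.
have -> : i = x + 1 + (i - x.+1) by lia.
rewrite !expnD !divnMA mulKn ?expn_gt0 // expn1 divn2.
rewrite half_dbl1.
exact: IH.
Qed.

Lemma decomp k : 0 < k -> exists x q, k = 2 ^ x * q.*2.+1.
Proof.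
elim: k {-2}k (leqnn k) => [|n IH] k Hk Hpos; first by lia.
case Ho: (odd k).
  exists 0, k./2; rewrite expn0 mul1n -[in LHS](odd_double_half k) Ho; lia.
have Hk2 : k = (k./2).*2 by rewrite -[in LHS](odd_double_half k) Ho.
have [x [q Hxq]] : exists x q, k./2 = 2 ^ x * q.*2.+1.
  apply: IH; lia.
exists x.+1, q; rewrite Hk2 Hxq expnS -mulnA; lia.
Qed.

Lemma Good_decomp r k : Good r k -> exists s, all (fun x => x < r) s /\ CodeSeq.code s = k.
Proof.
elim: k {-2}k (leqnn k) => [|n IH] k Hk Hg.
  by move: Hk; rewrite leqn0 => /eqP ->; exists [::].
case: (posnP k) => [->|Hpos]; first by exists [::].
have [x [q E]] := decomp Hpos.
have Hxr : x < r.
  rewrite ltnNge; apply/negP => Hrx.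
  move: (Hg 0); rewrite expn0 divn1 /badb Hpos /= E.
  by rewrite dvdn_mulr // dvdn_exp2l.
have Hq : Good r q.
  move=> j; move: (Hg (x + 1 + j)).
  rewrite E !expnD !divnMA mulKn ?expn_gt0 // expn1 divn2.
  by rewrite half_dbl1.
have Hqk : q <= n.
  have : q < k by rewrite E; have := expn_gt0 2 x; nia.
  lia.
have [s [Hs Es]] := IH q Hqk Hq.
by exists (x :: s); rewrite /= Hxr Hs Es E.
Qed.


Lemma comp_inv f gs v y : eval (CComp f gs) v y -> exists ys, evals gs v ys /\ eval f ys y.
Proof. by move=> H; inversion H; subst; eexists; split; eauto. Qed.
Lemma evals_cons_inv g gs v ys : evals (g :: gs) v ys ->
  exists y ys', ys = y :: ys' /\ eval g v y /\ evals gs v ys'.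
Proof. by move=> H; inversion H; subst; do 2 eexists; split; eauto. Qed.
Lemma evals_nil_inv v ys : evals [::] v ys -> ys = [::].
Proof. by move=> H; inversion H. Qed.
Lemma prec0_inv f g v y : eval (CPrec f g) (0 :: v) y -> eval f v y.
Proof. by move=> H; inversion H; subst. Qed.
Lemma precS_inv f g n v y : eval (CPrec f g) (n.+1 :: v) y ->
  exists r, eval (CPrec f g) (n :: v) r /\ eval g (n :: r :: v) y.
Proof. by move=> H; inversion H; subst; eexists; split; eauto. Qed.
Lemma proj_inv i v y : eval (CProj i) v y -> y = nth 0 v i.
Proof. by move=> H; inversion H. Qed.
Lemma mu_inv f v n : eval (CMu f) v n -> eval f (n :: v) 0.
Proof. by move=> H; inversion H. Qed.

Lemma pickle_inj (T : countType) : injective (@pickle T).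
Proof. exact: (pcan_inj (@pickleK T)). Qed.

Definition dist (a b : nat) := (a - b) + (b - a).

Definition TEST r c := CComp (CPrec (K 1) (CComp DIST [:: CComp c [:: P2]; CProj 3]))
  [:: CComp (VALID r) [:: P0]; P0; P1].

Lemma eval_spec n c f v : spec n c f -> size v = n -> eval c v (f v).
Proof. by move=> H Hv; apply/(H v Hv). Qed.

Lemma test_invalid r c k m : validf r k = 0 -> eval (TEST r c) [:: k; m] 1.
Proof.
move=> Hv; econstructor.
  constructor; first exact: (eval_spec (spec_c1 (spec_VALID r) (sP0 (n:=2) isT))).
  constructor; first by constructor.
  constructor; first by constructor.
  constructor.
rewrite /= Hv; constructor.
exact: (eval_spec (@spec_K 2 1)).
Qed.

Lemma test_valid r c k m z : validf r k = 1 -> eval c [:: k] z ->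
  eval (TEST r c) [:: k; m] (dist z m).
Proof.
move=> Hv Hc; econstructor.
  constructor; first exact: (eval_spec (spec_c1 (spec_VALID r) (sP0 (n:=2) isT))).
  constructor; first by constructor.
  constructor; first by constructor.
  constructor.
rewrite /= Hv; econstructor.
  constructor; exact: (eval_spec (@spec_K 2 1)).
econstructor.
  constructor.
    econstructor; last exact: Hc.
    constructor; first by constructor.
    constructor.
  constructor; first by constructor.
  constructor.
exact: (eval_spec spec_DIST).
Qed.

Lemma test_inv r c k m y : eval (TEST r c) [:: k; m] y ->
  (validf r k = 0 /\ y = 1) \/
  (validf r k = 1 /\ exists z, eval c [:: k] z /\ y = dist z m).
Proof.
case/comp_inv => ys [Hs Hp].
have Hsp := specs_cons (spec_c1 (spec_VALID r) (sP0 (n:=2) isT))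
   (specs_cons (sP0 (n:=2) isT) (specs_cons (sP1 (n:=2) isT) (@specs_nil 2))).
move/(Hsp.2 [:: k; m] erefl): Hs => E; subst ys.
move: Hp => /=.
case: (validf01 r k) => ->.
  move/prec0_inv => H; left; split => //.
  by apply/((@spec_K 2 1 [:: k; m] erefl _)).
case/precS_inv => r0 [_ HG]; right; split => //.
case/comp_inv: HG => ys [Hs Hd].
case/evals_cons_inv: Hs => y1 [ys1 [E1 [H1 Hs1]]]; subst ys.
case/evals_cons_inv: Hs1 => y2 [ys2 [E2 [H2 /evals_nil_inv E3]]]; subst ys1 ys2.
move/proj_inv: H2 => /= E2; subst y2.
case/comp_inv: H1 => ys3 [Hs3 Hc].
case/evals_cons_inv: Hs3 => y3 [ys4 [E3 [H3 /evals_nil_inv E4]]]; subst.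
move/proj_inv: H3 => /= E; subst.
exists y1; split => //.
exact: ((@spec_DIST [:: y1; m] erefl y).1 Hd).
Qed.

Lemma seq_to_word r s : all (fun x => x < r) s -> exists w : word r, map val w = s.
Proof.
elim: s => [|x s IH] /=; first by exists [::].
case/andP=> Hx /IH [w Hw]; by exists (Ordinal Hx :: w); rewrite /= Hw.
Qed.

Lemma valid_pickle r k : validf r k = 1 <-> exists w : word r, pickle w = k.
Proof.
rewrite validf_Good; split.
  case/Good_decomp => s [Hs Es]; have [w Hw] := seq_to_word Hs.
  by exists w; rewrite -Es -Hw.
case=> w <-.
have -> : pickle w = CodeSeq.code (map val w) by [].
apply: Good_code; rewrite all_map; apply/allP => i _ /=; exact: ltn_ord.
Qed.

Definition Mdec r (Z : word r -> seq bool) (P : seq bool) : option (word r) :=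
  match pselect (exists s, Z s == P) with
  | left h => Some (xchoose h)
  | right _ => None
  end.

Lemma Mdec_Z r (Z : word r -> seq bool) s : injective Z -> Mdec Z (Z s) = Some s.
Proof.
move=> Zi; rewrite /Mdec; case: pselect => [h|n]; last by exfalso; apply: n; exists s.
by congr Some; apply: Zi; apply/eqP; exact: (xchooseP h).
Qed.

Lemma Mdec_rec r (Z : word r -> seq bool) : compression_algorithm Z -> computing_machine (Mdec Z).
Proof.
case=> Zi [c Hc].
exists (CMu (TEST r c)) => P y; split.
  move/mu_inv/test_inv => [[_ //]|[Hv [z [Hz Ed]]]].
  have Ezm : z = pickle P by rewrite /dist in Ed; lia.
  case/valid_pickle: Hv => w Ew; subst y.
  case/Hc: Hz => b [[<-] Eb].
  have EZ : Z w = P by apply: pickle_inj; rewrite -Eb.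
  by exists w; rewrite -EZ Mdec_Z.
case=> b0 []; rewrite /Mdec; case: pselect => // h [<-] ->.
set b := xchoose h; have Eb : Z b = P by apply/eqP; exact: (xchooseP h).
constructor.
  have -> : 0 = dist (pickle (Z b)) (pickle P) by rewrite Eb /dist subnn.
  apply: test_valid; first by apply/valid_pickle; exists b.
  by apply/Hc; exists (Z b).
move=> m Hm.
case: (validf01 r m) => Hv.
  by exists 0; apply: test_invalid.
have [w Ew] := (valid_pickle r m).1 Hv.
exists (dist (pickle (Z w)) (pickle P)).-1.
have Hne : pickle (Z w) != pickle P.
  apply/negP => /eqP /pickle_inj E.
  have : w = b by apply: Zi; rewrite E.
  by move=> E'; move: Hm; rewrite -Ew E' ltnn.
have -> : (dist (pickle (Z w)) (pickle P)).-1.+1 = dist (pickle (Z w)) (pickle P).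
  move: Hne; rewrite /dist; move: (pickle _) (pickle _) => a a' /eqP; lia.
subst m; apply: test_valid; first by apply/valid_pickle; exists w.
by apply/Hc; exists (Z w).
Qed.


Import numFieldTopology.Exports numFieldNormedType.Exports.
Local Open Scope classical_set_scope.
Local Open Scope ring_scope.

Lemma AIC_ge0 (R : realType) r (C : seq bool -> option (word r)) s : (0 <= AIC R C s)%E.
Proof. by apply: le_ereal_inf_tmp => _ [P _ <-]; rewrite lee_fin ler0n. Qed.

Lemma AIC_bound (R : realType) r (C : seq bool -> option (word r)) (Z : word r -> seq bool) :
  universal_machine C -> compression_algorithm Z ->
  exists c0 : nat, forall s, (AIC R C s <= I_Z R Z s + (c0%:R)%:E)%E.
Proof.
move=> hC hZ; have [c0 Hc0] := hC.2 _ (Mdec_rec hZ).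
exists c0 => s; have [P' [HP' Hsz]] := Hc0 (Z s) s (Mdec_Z s hZ.1).
apply: ereal_inf_le; exists ((size P')%:R)%:E; first by exists P'.
by rewrite /I_Z -EFinD lee_fin -natrD ler_nat.
Qed.

Section Dyn.
Variables (R : realType) (d : measure_display) (X : measurableType d)
  (mu : probability X R) (T : X -> X) (hT : measurable_fun setT T)
  (r : nat) (A : 'I_r -> set X) (hA : is_partition A).

Lemma iter_meas i : measurable_fun setT (iter i T).
Proof.
elim: i => [|i IH] /=; first exact: measurable_id.
exact: (measurableT_comp hT IH).
Qed.

Lemma cyl_meas n (w : n.-tuple 'I_r) : measurable (cylinder T A w).
Proof.
apply: fin_bigcap_measurable; first exact: finite_finset.
move=> i _; rewrite -[_ @^-1` _]setTI.
exact: (iter_meas i measurableT (hA.1 _)).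
Qed.

Lemma cyl_disj n (w w' : n.-tuple 'I_r) x :
  cylinder T A w x -> cylinder T A w' x -> w = w'.
Proof.
move=> H1 H2; apply: eq_from_tnth => i.
apply/eqP; apply/negP => /negP Hne.
have := hA.2.1 _ _ Hne.
move=> E; have : (A (tnth w i) `&` A (tnth w' i)) (iter i T x).
  by split; [exact: H1 | exact: H2].
by rewrite E.
Qed.

Lemma sum_cyl_seq n (s : seq (n.-tuple 'I_r)) : uniq s ->
  [/\ (\sum_(w <- s) mu (cylinder T A w))%E = mu (\big[setU/set0]_(w <- s) cylinder T A w),
      measurable (\big[setU/set0]_(w <- s) cylinder T A w) &
      forall x, (\big[setU/set0]_(w <- s) cylinder T A w) x ->
        exists2 w, w \in s & cylinder T A w x].
Proof.
elim: s => [|w s IH] /=.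
  by move=> _; rewrite !big_nil measure0; split => // x.
case/andP=> Hw /IH [E Hm Hx]; rewrite !big_cons.
split.
- rewrite measureU //; first by rewrite E.
  + exact: cyl_meas.
  + apply/seteqP; split => // x [H1 /Hx [w' Hw' H2]].
    by move: Hw; rewrite (cyl_disj H1 H2) Hw'.
- by apply: measurableU => //; exact: cyl_meas.
- move=> x [H|/Hx [w' Hw' H]]; first by exists w => //; rewrite inE eqxx.
  by exists w' => //; rewrite inE Hw' orbT.
Qed.

Lemma sum_cyl_le1 n : (\sum_(w : n.-tuple 'I_r) mu (cylinder T A w) <= 1)%E.
Proof.
rewrite -big_enum /=.
set s := enum _.
have [E Hm _] := @sum_cyl_seq n s (enum_uniq _).
rewrite E.
exact: probability_le1.
Qed.

Lemma mean_info_ge0 (I : word r -> \bar R) : (forall s, 0 <= I s)%E ->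
  forall n, (0 <= mean_info mu T A I n)%E.
Proof.
move=> HI n; rewrite /mean_info; apply: sume_ge0 => w _.
by apply: mule_ge0 => //; exact: measure_ge0.
Qed.

Lemma mean_info_le (I J : word r -> \bar R) (c0 : R) : 0 <= c0 ->
  (forall s, 0 <= J s)%E ->
  (forall s, I s <= J s + c0%:E)%E ->
  forall n, (mean_info mu T A I n <= mean_info mu T A J n + c0%:E)%E.
Proof.
move=> c0ge0 HJ HIJ n; rewrite /mean_info.
apply: (@le_trans _ _ (\sum_(w : n.-tuple 'I_r) ((J (tval w) + c0%:E) * mu (cylinder T A w)))%E).
  apply: lee_sum => w _; apply: lee_wpmul2r; first exact: measure_ge0.
  exact: HIJ.
under eq_bigr do rewrite ge0_muleDl ?lee_fin //.
rewrite big_split /=; apply: leeD => //.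
rewrite -ge0_sume_distrr; last by move=> w _; exact: measure_ge0.
apply: (@le_trans _ _ (c0%:E * 1)%E); last by rewrite mule1.
apply: lee_wpmul2l; first by rewrite lee_fin.
exact: sum_cyl_le1.
Qed.

End Dyn.

Definition einv (R : realType) (p : R) : R^nat := fun n => (n%:R `^ p)^-1.

Lemma inv_powR_cvg0 (R : realType) (p : R) : 0 < p -> einv p @ \oo --> 0.
Proof.
move=> p0; rewrite -cvg_shiftS /=.
have H := (@cvg_at_rightP R (fun a => a `^ p) 0 0).1 (powR_cvg0 p0) (@harmonic R).
have := H (conj (@harmonic_gt0 R) cvg_harmonic).
apply: cvg_trans; apply: near_eq_cvg; apply: nearW => n /=.
by rewrite -powR_inv1 ?ler0n // -powRrM mulN1r powRN.
Qed.


Lemma entropy_transfer (R : realType) (d : measure_display) (X : measurableType d)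
  (mu : probability X R) (T : X -> X) (hT : measurable_fun setT T)
  (r : nat) (A : 'I_r -> set X) (hA : is_partition A)
  (Ia Ib : word r -> \bar R) (c0 : R) :
  0 <= c0 -> (forall s, 0 <= Ia s)%E -> (forall s, 0 <= Ib s)%E ->
  (forall s, Ia s <= Ib s + c0%:E)%E ->
  forall p : R, 0 < p -> q_entropy mu T A Ib p = 0%E -> q_entropy mu T A Ia p = 0%E.
Proof.
move=> c0ge0 Ha0 Hb0 Hab p p0 Hb.
set ua := fun n : nat => (mean_info mu T A Ia n * ((n%:R `^ p)^-1)%:E)%E.
set ub := fun n : nat => (mean_info mu T A Ib n * ((n%:R `^ p)^-1)%:E)%E.
set vc := fun n : nat => ((c0 * (n%:R `^ p)^-1)%:E : \bar R).
have e0 n : 0 <= (n%:R `^ p)^-1 :> R by rewrite invr_ge0 powR_ge0.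
have Hb' : limn_esup ub = 0%E := Hb.
have ub0 : ub @ \oo --> 0%E.
  apply: limn_esup_le_cvg; first by rewrite Hb'.
  move=> n; apply: mule_ge0; [exact: mean_info_ge0 | by rewrite lee_fin].
have vc0 : vc @ \oo --> 0%E.
  apply: cvg_EFin; first exact: nearW.
  have := cvgMl_tmp (a := c0) (inv_powR_cvg0 p0); rewrite mulr0.
  move=> H; exact: H.
have ua0 : ua @ \oo --> 0%E.
  apply: (@squeeze_cvge _ _ _ _ (cst 0%E) ua (fun n => ub n + vc n)%E).
  - apply: nearW => n; apply/andP; split.
      apply: mule_ge0; [exact: mean_info_ge0 | by rewrite lee_fin].
    rewrite /ua /ub /vc.
    apply: (@le_trans _ _ ((mean_info mu T A Ib n + c0%:E) * ((n%:R `^ p)^-1)%:E)%E).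
      apply: lee_wpmul2r; first by rewrite lee_fin.
      exact: mean_info_le.
    rewrite ge0_muleDl; [by rewrite -EFinM | exact: mean_info_ge0 | by rewrite lee_fin].
  - exact: cvg_cst.
  - by rewrite -[0%E]adde0; apply: cvgeD.
exact: (cvg_limn_einf_sup ua0).2.
Qed.


End Aux.

Theorem corollary5p7 (R : realType) (d : measure_display) (X : measurableType d)
  (mu : probability X R) (T : X -> X) (hT : measurable_fun setT T)
  (r : nat) (A : 'I_r -> set X) (hA : is_partition A)
  (C : seq bool -> option (word r)) (hC : universal_machine C)
  (Z : word r -> seq bool) (hZ : compression_algorithm Z) :
  (chaos_index mu T A (AIC R C) <= chaos_index mu T A (I_Z R Z))%E.
Proof.
have [c0 Hc0] := Aux.AIC_bound R hC hZ.
rewrite /chaos_index; apply: le_ereal_inf => _ [p [p0 Hp] <-]; exists p => //; split => //.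
apply: (Aux.entropy_transfer hT hA (ler0n _ c0) (fun s => Aux.AIC_ge0 R C s) _ Hc0 p0 Hp).
by move=> s; rewrite /I_Z lee_fin ler0n.
Qed.
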